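(* Let $\mu\in\mathbb{Z}_{\ge0}^m$ and let $\nu\in\{0,\dots,m\}^n$ be non-increasing ($\nu_1\ge\dots\ge\nu_n$), and let $t=\alpha^\mu\beta^\nu$. Let $F_\nu\in\{0,1\}^{m\times n}$ be the bottom-left flushed matrix with $cs(F_\nu)=\nu$. For $\mathcal{R}\in\{0,1\}^{m\times n}$ the following are equivalent: (1) $\mathcal{R}$ is a res-representation of $t$; (2) $(\mathcal{R},F_\nu)$ is a sorted-flushed syl-representation of $t$.
   Context: For $M\in\{0,1\}^{m\times n}$: $\bar M_{ij}=1-M_{ij}$; $rs(M)=(\sum_j M_{ij})_i$; $cs(M)=(\sum_i M_{ij})_j$; $ars(M)=(i+\sum_j M_{ij})_{i=1..m}$; $acs(M)=(j+\sum_i M_{ij})_{j=1..n}$. $M$ is bottom-left flushed if whenever $M_{ij}=1$, also $M_{i'j'}=1$ for all $i'\ge i$, $j'\le j$ (so $F_\nu$ has $(F_\nu)_{ij}=1$ iff $i>m-\nu_j$). A res-representation of $\alpha^\mu\beta^\nu$ is $\mathcal{R}\in\{0,1\}^{m\times n}$ with $rs(\mathcal{R})=\mu$, $cs(\bar{\mathcal{R}})=\nu$. $PC(A,B)$ means $\{acs(A)_1,\dots,acs(A)_n,ars(B)_1,\dots,ars(B)_m\}=\{1,\dots,m+n\}$. A syl-representation of $\alpha^\mu\beta^\nu$ is a pair $(\mathcal{S}_1,\mathcal{S}_2)$ in $\{0,1\}^{m\times n}$ with $rs(\mathcal{S}_1)=\mu$, $cs(\mathcal{S}_2)=\nu$,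 $PC(\mathcal{S}_1,\mathcal{S}_2)$. A pair $(A,B)$ is sorted if $acs(A)$ and $ars(B)$ are strictly increasing, flushed if $B$ is bottom-left flushed, sorted-flushed if both. *)

(* Defs.v *)
(* 0/1 matrices are 'M[bool]_(m,n); row/column indices are
   0-based ordinals, shifted by +1 where the paper's formulas use the index
   value (ars, acs, F_nu). *)
From mathcomp Require Import all_boot all_order all_algebra.
Set Implicit Arguments. Unset Strict Implicit. Unset Printing Implicit Defensive.

Section Defs.
Variables m n : nat.
Implicit Type M : 'M[bool]_(m, n).

Definition cmpl M : 'M[bool]_(m, n) := \matrix_(i, j) ~~ M i j.
Definition rs M (i : 'I_m) : nat := \sum_(j < n) (M i j : nat).
Definition cs M (j : 'I_n) : nat := \sum_(i < m) (M i j : nat).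
Definition ars M (i : 'I_m) : nat := i.+1 + rs M i.
Definition acs M (j : 'I_n) : nat := j.+1 + cs M j.

Definition bl_flushed M : Prop :=
  forall (i i' : 'I_m) (j j' : 'I_n),
    M i j -> (i <= i')%N -> (j' <= j)%N -> M i' j'.

Definition Fmat (nu : 'I_n -> nat) : 'M[bool]_(m, n) :=
  \matrix_(i, j) (m - nu j < i.+1)%N.

Definition res_rep (mu : 'I_m -> nat) (nu : 'I_n -> nat) M : Prop :=
  (forall i, rs M i = mu i) /\ (forall j, cs (cmpl M) j = nu j).

Definition PC (A B : 'M[bool]_(m, n)) : Prop :=
  [seq acs A j | j <- enum 'I_n] ++ [seq ars B i | i <- enum 'I_m]
    =i iota 1 (m + n).

Definition syl_rep (mu : 'I_m -> nat) (nu : 'I_n -> nat)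
    (S1 S2 : 'M[bool]_(m, n)) : Prop :=
  (forall i, rs S1 i = mu i) /\ (forall j, cs S2 j = nu j) /\ PC S1 S2.

Definition pair_sorted (A B : 'M[bool]_(m, n)) : Prop :=
  (forall j j' : 'I_n, (j < j')%N -> (acs A j < acs A j')%N) /\
  (forall i i' : 'I_m, (i < i')%N -> (ars B i < ars B i')%N).

Definition pair_flushed (A B : 'M[bool]_(m, n)) : Prop := bl_flushed B.

Definition sorted_flushed (A B : 'M[bool]_(m, n)) : Prop :=
  pair_sorted A B /\ pair_flushed A B.
End Defs.

(* Main.v *)
Require Import Defs.
From mathcomp Require Import all_boot all_order all_algebra.
From mathcomp Require Import zify.

Lemma sum_bool_le n (b : 'I_n -> bool) : (\sum_(k < n) (b k : nat) <= n)%N.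
Proof.
apply: leq_trans (_ : \sum_(k < n) 1 <= n)%N.
  by apply: leq_sum => k _; case: (b k).
by rewrite sum1_card card_ord.
Qed.

Lemma sum_lb n j (b : 'I_n -> bool) :
  (j < n)%N -> (forall k : 'I_n, (k <= j)%N -> b k) ->
  (j.+1 <= \sum_(k < n) (b k : nat))%N.
Proof.
elim: n b => [|n IH] b; first by [].
move=> hj hb; rewrite big_ord_recr /=.
case: (ltnP j n) => h.
- have := IH (fun k => b (widen_ord (leqnSn n) k)) h.
  have H : forall k : 'I_n, (k <= j)%N -> b (widen_ord (leqnSn n) k) by move=> k hk; apply: hb.
  move=> /(_ H) /= ; lia.
- have -> : j = n by lia.
  have hm : b ord_max by apply: hb => /=; lia.
  rewrite hm.
  have -> : \sum_(i < n) (b (widen_ord (leqnSn n) i) : nat) = \sum_(i < n) 1.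
    apply: eq_bigr => i _; rewrite hb //=; have := ltn_ord i; lia.
  by rewrite sum1_card card_ord addn1.
Qed.

Lemma sum_ub n j (b : 'I_n -> bool) :
  (forall k : 'I_n, (j <= k)%N -> ~~ b k) ->
  (\sum_(k < n) (b k : nat) <= j)%N.
Proof.
elim: n b => [|n IH] b; first by rewrite big_ord0.
move=> hb.
case: (ltnP n j) => h.
  have := @sum_bool_le _ b; lia.
rewrite big_ord_recr /= (negbTE (hb ord_max h)) addn0.
by apply: IH => k hk; apply: hb.
Qed.

Lemma sum_ge_c m c : \sum_(i < m) ((c <= i)%N : nat) = m - c.
Proof.
elim: m => [|m IH]; first by rewrite big_ord0.
rewrite big_ord_recr /= IH; case: (leqP c m) => h /=; lia.
Qed.

Lemma cs_cmpl m n (R : 'M[bool]_(m, n)) j : cs R j + cs (cmpl R) j = m.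
Proof.
rewrite /cs -big_split /=.
rewrite (eq_bigr (fun _ => 1)) ?sum1_card ?card_ord // => i _.
by rewrite mxE; case: (R i j).
Qed.

Lemma sorted_ord n (f : 'I_n -> nat) :
  (forall j j' : 'I_n, (j < j')%N -> (f j < f j')%N) ->
  sorted ltn [seq f j | j <- enum 'I_n].
Proof.
move=> hf; rewrite sorted_map.
have : sorted ltn [seq val i | i <- enum 'I_n] by rewrite val_enum_ord iota_ltn_sorted.
rewrite sorted_map => hs.
by apply: sub_sorted hs => x y /= h; apply: hf.
Qed.

Section Key.
Variables (m n : nat) (nu : 'I_n -> nat).
Hypothesis hnu_le : forall j, (nu j <= m)%N.
Hypothesis hnu_noninc : forall j j' : 'I_n, (j <= j')%N -> (nu j' <= nu j)%N.

Definition A' := [seq (j : 'I_n).+1 + (m - nu j) | j <- enum 'I_n].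
Definition AF := [seq ars (Fmat m nu) i | i <- enum 'I_m].

Lemma rsF i : rs (Fmat m nu) i = \sum_(j < n) ((m - nu j < i.+1)%N : nat).
Proof. by apply: eq_bigr => j _; rewrite mxE. Qed.

Lemma A'_sorted : sorted ltn A'.
Proof.
apply: (@sorted_ord _) => j j' h.
have := hnu_noninc _ _ (ltnW h); have := hnu_le j; have := hnu_le j'; lia.
Qed.

Lemma arsF_mono : forall i i' : 'I_m, (i < i')%N -> (ars (Fmat m nu) i < ars (Fmat m nu) i')%N.
Proof.
move=> i i' h; rewrite /ars.
suff : (rs (Fmat m nu) i <= rs (Fmat m nu) i')%N by lia.
rewrite !rsF; apply: leq_sum => j _.
case: (leqP (m - nu j) i) (leqP (m - nu j) i') => h1 h2 /=; rewrite ?ltnS ?h1 ?h2 /=; lia.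
Qed.

Lemma AF_sorted : sorted ltn AF.
Proof. exact: (@sorted_ord _ _ arsF_mono). Qed.

Lemma key_uniq : uniq (A' ++ AF).
Proof.
rewrite cat_uniq (sorted_uniq ltn_trans ltnn A'_sorted)
  (sorted_uniq ltn_trans ltnn AF_sorted) andbT /=.
apply/hasPn => x /mapP [i _ ->]; apply/mapP => [[j _]].
rewrite /ars rsF.
case: (leqP (m - nu j) i) => h.
- have : (j.+1 <= \sum_(k < n) ((m - nu k < i.+1)%N : nat))%N.
    apply: sum_lb; first exact: ltn_ord.
    move=> k hk; have := hnu_noninc _ _ hk; have := hnu_le k; have := hnu_le j; lia.
  lia.
- have : (\sum_(k < n) ((m - nu k < i.+1)%N : nat) <= j)%N.
    apply: sum_ub => k hk; have := hnu_noninc _ _ hk; have := hnu_le k; have := hnu_le j.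
    move=> *; apply/negP; lia.
  lia.
Qed.

Lemma key_mem : A' ++ AF =i iota 1 (m + n).
Proof.
have [] := @uniq_min_size _ _ (iota 1 (m + n)) key_uniq; last by [].
- move=> x; rewrite mem_cat mem_iota => /orP [] /mapP.
  + move=> [j _ ->]; have := ltn_ord j; lia.
  + move=> [i _ ->]; rewrite /ars; have := ltn_ord i; have := @sum_bool_le _ (fun j => Fmat m nu i j).
    rewrite /rs; lia.
- by rewrite size_iota size_cat !size_map -!enumT !size_enum_ord addnC.
Qed.

End Key.

Theorem mainTheorem6 (m n : nat) (mu : 'I_m -> nat) (nu : 'I_n -> nat)
  (hnu_le : forall j, (nu j <= m)%N)
  (hnu_noninc : forall j j' : 'I_n, (j <= j')%N -> (nu j' <= nu j)%N)
  (R : 'M[bool]_(m, n)) :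
  res_rep mu nu R <->
  (syl_rep mu nu R (Fmat m nu) /\ sorted_flushed R (Fmat m nu)).
Proof.
have flF : pair_flushed R (Fmat m nu).
  move=> i i' j j'; rewrite !mxE => h hi hj.
  have := hnu_noninc _ _ hj; have := hnu_le j; have := hnu_le j'; lia.
have sortF : forall i i' : 'I_m, (i < i')%N -> (ars (Fmat m nu) i < ars (Fmat m nu) i')%N.
  exact: (@arsF_mono m n nu).
split.
- move=> [hmu hnu].
  have hacs : forall j, acs R j = j.+1 + (m - nu j).
    move=> j; rewrite /acs -(hnu j); have := @cs_cmpl _ _ R j; lia.
  split; [split; [exact: hmu | split] | split; [split|exact: flF]].
  + move=> j; rewrite /cs (eq_bigr (fun i : 'I_m => ((m - nu j <= i)%N : nat))); last first.
      by move=> i _; rewrite mxE.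
    rewrite sum_ge_c; have := hnu_le j; lia.
  + rewrite /PC (eq_map hacs); exact: (@key_mem m n nu hnu_le hnu_noninc).
  + move=> j j' h; rewrite !hacs.
    have := hnu_noninc _ _ (ltnW h); have := hnu_le j; have := hnu_le j'; lia.
  + exact: sortF.
- move=> [[hmu [_ hpc]] [[sortR _] _]]; split => // j.
  set S := [seq acs R j | j <- enum 'I_n] ++ @AF m _ nu.
  have uS : uniq S.
    apply: (leq_size_uniq (iota_uniq 1 (m + n))).
      by move=> x; rewrite -hpc.
    by rewrite size_iota size_cat !size_map -!enumT !size_enum_ord addnC.
  have uK := @key_uniq m n nu hnu_le hnu_noninc.
  have KM := @key_mem m n nu hnu_le hnu_noninc.
  move: (uS) (uK); rewrite !cat_uniq => /and3P [_ dS _] /and3P [_ dK _].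
  have eqm : [seq acs R j | j <- enum 'I_n] =i @A' m _ nu.
    move=> x; apply/idP/idP => hx.
    + have : x \in S by rewrite mem_cat hx.
      rewrite hpc -KM mem_cat => /orP [] // hF.
      by move/hasP: dS; case; exists x.
    + have : x \in @A' m _ nu ++ @AF m _ nu by rewrite mem_cat hx.
      rewrite KM -hpc mem_cat => /orP [] // hF.
      by move/hasP: dK; case; exists x.
  have := irr_sorted_eq ltn_trans ltnn (@sorted_ord _ _ sortR) (@A'_sorted m n nu hnu_le hnu_noninc) eqm.
  move/eq_in_map => /(_ j (mem_enum _ j)) /=.
  rewrite /acs => h; have := @cs_cmpl _ _ R j; have := hnu_le j; lia.
Qed.
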